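(* Let $\boldsymbol\varphi\in\mathcal{OB}$ and let $g_{\boldsymbol\varphi}$ be a product metric with associated component operators $\mathcal G_{\boldsymbol\varphi,j}:H^1_0(\mathcal D,\mathbb C)\to H^{-1}(\mathcal D,\mathbb C)$. Then $g_{\boldsymbol\varphi}$ is horizontally compatible with the $L$-metric at $\boldsymbol\varphi$, i.e. $\mathcal H^g_{\boldsymbol\varphi}=\mathcal H^L_{\boldsymbol\varphi}$, if and only if for every $j=1,\dots,p$ the function $i\varphi_j$ is an eigenfunction of $\mathcal G_{\boldsymbol\varphi,j}$ on $T_{\varphi_j}\mathcal S_{N_j}$ to a nonzero real eigenvalue, i.e. there is $\varsigma_j\in\mathbb R\setminus\{0\}$ with $\langle\mathcal G_{\boldsymbol\varphi,j}(i\varphi_j),z\rangle=\varsigma_j\,\mathrm{Re}\int_{\mathcal D}i\varphi_j\overline z\,dx$ for all $z\in T_{\varphi_j}\mathcal S_{N_j}$.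
   Context: $\mathcal D\subset\mathbb R^d$ bounded Lipschitz, $d\in\{2,3\}$; $H=[H^1_0(\mathcal D,\mathbb C)]^p$ real Hilbert space, $\langle\cdot,\cdot\rangle$ the real duality pairing between $H^{-1}$ and $H^1_0$. $N_j>0$; $\mathcal S_{N_j}=\{\varphi\in H^1_0(\mathcal D,\mathbb C):\int|\varphi|^2=N_j\}$, $T_{\varphi}\mathcal S_{N_j}=\{z:\mathrm{Re}\int z\overline\varphi=0\}$; $\mathcal{OB}=\mathcal S_{N_1}\times\dots\times\mathcal S_{N_p}$, $T_{\boldsymbol\varphi}\mathcal{OB}=\prod_jT_{\varphi_j}\mathcal S_{N_j}$. Vertical space $\mathcal V_{\boldsymbol\varphi}=\{i\boldsymbol\varphi\Sigma:\Sigma\text{ real diagonal}\}=\{(i\varphi_1\sigma_1,\dots,i\varphi_p\sigma_p):\sigma_j\in\mathbb R\}$. For a Riemannian metric $g_{\boldsymbol\varphi}$ (an inner product on $T_{\boldsymbol\varphi}\mathcal{OB}$), $\mathcal H^g_{\boldsymbol\varphi}=\{\boldsymbol\xi\in T_{\boldsymbol\varphi}\mathcal{OB}:g_{\boldsymbol\varphi}(\boldsymbol\xi,\boldsymbol\nu)=0\ \forall\boldsymbol\nu\in\mathcal V_{\boldsymbol\varphi}\}$; for the $L$-metric $g_L(\mathbf y,\mathbf z)=\sum_j\mathrm{Re}\int y_j\overline{z_j}$ this is $\mathcal H^L_{\boldsymbol\varphi}=\{\boldsymbol\xi\in H:\int\varphi_j\overline{\xi_j}\,dx=0\in\mathbb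 C\ \forall j\}$. A product metric here is one defined on all of $H$ of the form $g_{\boldsymbol\varphi}(\mathbf y,\mathbf z)=\sum_j\langle\mathcal G_{\boldsymbol\varphi,j}y_j,z_j\rangle$ with linear $\mathcal G_{\boldsymbol\varphi,j}:H^1_0(\mathcal D,\mathbb C)\to H^{-1}(\mathcal D,\mathbb C)$. *)

(* Defs.v *)
From mathcomp Require Import all_boot all_algebra.
From mathcomp Require Import all_classical all_reals all_analysis.
From mathcomp Require Import complex.
Import GRing.Theory Num.Theory numFieldNormedType.Exports.

Set Implicit Arguments.
Unset Strict Implicit.
Unset Printing Implicit Defensive.

Local Open Scope ring_scope.
Local Open Scope classical_set_scope.

(* Euclidean space R^d (d = 2 or d = 3) with its Lebesgue measure.          *)
Record euclid (R : realType) := Euclid {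
  sV  : normedModType R;
  sdM : measure_display;
  sM  : measurableType sdM;
  smu : {measure set sM -> \bar R};
  stoV : sM -> sV;                       (* identity of the carrier *)
  sdim1 : nat;                           (* d - 1 *)
  sbasis : 'I_sdim1.+1 -> sV;
  sdot : sV -> sV -> R
}.

Section Spaces.
Variable R : realType.

Definition mu2 : {measure set _ -> \bar R} :=
  (@lebesgue_measure R \x @lebesgue_measure R)%E.
Definition mu3 : {measure set _ -> \bar R} :=
  ((@lebesgue_measure R \x @lebesgue_measure R) \x @lebesgue_measure R)%E.

Definition E2 : euclid R :=
  @Euclid R (R * R)%type _ _ mu2 (fun x => x) 1
    (fun i => if val i == 0%N then (1, 0) else (0, 1))
    (fun x y => x.1 * y.1 + x.2 * y.2).

Definition E3 : euclid R :=
  @Euclid R (R * R * R)%type _ _ mu3 (fun x => x) 2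
    (fun i => if val i == 0%N then (1, 0, 0)
              else if val i == 1%N then (0, 1, 0) else (0, 0, 1))
    (fun x y => x.1.1 * y.1.1 + x.1.2 * y.1.2 + x.2 * y.2).

Definition Rd (d : nat) : euclid R := if d == 3%N then E3 else E2.

End Spaces.

Section Sobolev.
Variables (R : realType) (E : euclid R).

Local Notation V := (@sV R E).
Local Notation M := (@sM R E).
Local Notation mu := (@smu R E).
Local Notation toV := (@stoV R E).
Local Notation d1 := (@sdim1 R E).
Local Notation e := (@sbasis R E).
Local Notation dot := (@sdot R E).

Definition abs2 (z : R[i]) : R := complex.Re z ^+ 2 + complex.Im z ^+ 2.

Definition euclid_norm (x : V) : R := Num.sqrt (dot x x).

(* D is a Lipschitz domain: at every boundary point, in suitable rotated    *)
(* coordinates (an orthonormal frame b, last axis b_d) and inside a ball,   *)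
(* D is the region strictly above the graph of a Lipschitz function h of    *)
(* the first d-1 coordinates.                                               *)
Definition lipschitz_boundary (D : set V) : Prop :=
  forall x, closure D x -> ~ D x ->
  exists (r : R) (b : 'I_d1.+1 -> V) (h : V -> R) (L : R),
    0 < r /\
    (forall i j, dot (b i) (b j) = (i == j)%:R) /\
    (forall y, h y = h (y - dot y (b ord_max) *: b ord_max)) /\
    (forall y z, `|h y - h z| <= L * euclid_norm (y - z)) /\
    (forall y, euclid_norm (y - x) < r ->
       (D y <-> h (y - x) < dot (y - x) (b ord_max))).

Definition bounded_lipschitz_domain (D : set V) : Prop :=
  open D /\ connected D /\ D !=set0 /\ bounded_set D /\ lipschitz_boundary D.

Definition onD (D : set V) : set M := toV @^-1` D.

Definition rint (D : set V) (f : V -> R) : R :=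
  Rintegral mu (onD D) (fun x => f (toV x)).

Definition eint (D : set V) (f : V -> R) : \bar R :=
  (\int[mu]_(x in onD D) (f (toV x))%:E)%E.

Definition cint (D : set V) (f : V -> R[i]) : R[i] :=
  Complex (rint D (fun x => complex.Re (f x))) (rint D (fun x => complex.Im (f x))).

Definition pder (l : seq 'I_d1.+1) (f : V -> R) : V -> R :=
  foldr (fun k g => 'D_(e k) g) f l.

Definition smooth (f : V -> R) : Prop :=
  forall l, continuous (pder l f) /\ (forall k x, derivable (pder l f) x (e k)).

Definition compact_support_in (D : set V) (f : V -> R[i]) : Prop :=
  compact (closure [set x | f x != 0]) /\ closure [set x | f x != 0] `<=` D.

Definition rtest (D : set V) (f : V -> R) : Prop :=
  smooth f /\ compact_support_in D (fun x => (f x)%:C%C).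

Definition ctest (D : set V) (f : V -> R[i]) : Prop :=
  smooth (fun x => complex.Re (f x)) /\ smooth (fun x => complex.Im (f x)) /\
  compact_support_in D f.

Definition cpder (k : 'I_d1.+1) (f : V -> R[i]) : V -> R[i] :=
  fun x => Complex ('D_(e k) (fun y => complex.Re (f y)) x) ('D_(e k) (fun y => complex.Im (f y)) x).

Definition L2 (D : set V) (u : V -> R[i]) : Prop :=
  measurable_fun (onD D) (fun x => complex.Re (u (toV x))) /\
  measurable_fun (onD D) (fun x => complex.Im (u (toV x))) /\
  (eint D (fun x => abs2 (u x)) < +oo)%E.

Definition weak_partial (D : set V) (k : 'I_d1.+1) (u w : V -> R[i]) : Prop :=
  forall psi, rtest D psi ->
    rint D (fun x => complex.Re (u x) * 'D_(e k) psi x) = - rint D (fun x => complex.Re (w x) * psi x) /\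
    rint D (fun x => complex.Im (u x) * 'D_(e k) psi x) = - rint D (fun x => complex.Im (w x) * psi x).

Definition weak_grad (D : set V) (u : V -> R[i]) (w : 'I_d1.+1 -> V -> R[i]) : Prop :=
  forall k, L2 D (w k) /\ weak_partial D k u (w k).

Definition H1dist2 (D : set V) (u : V -> R[i]) (w : 'I_d1.+1 -> V -> R[i])
    (v : V -> R[i]) (wv : 'I_d1.+1 -> V -> R[i]) : \bar R :=
  (eint D (fun x => abs2 (u x - v x)%R) +
   \sum_(k < d1.+1) eint D (fun x => abs2 (w k x - wv k x)%R))%E.

Definition H1norm2 (D : set V) (u : V -> R[i]) (w : 'I_d1.+1 -> V -> R[i]) : \bar R :=
  H1dist2 D u w (fun=> 0) (fun _ _ => 0).

Definition H10 (D : set V) (u : V -> R[i]) : Prop :=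
  L2 D u /\
  exists w, weak_grad D u w /\
  exists psi : nat -> V -> R[i], (forall n, ctest D (psi n)) /\
    ((fun n => H1dist2 D (psi n) (fun k => cpder k (psi n)) u w) @ \oo --> 0%E).

Definition ae_eq (D : set V) (u v : V -> R[i]) : Prop :=
  {ae mu, forall x, onD D x -> u (toV x) = v (toV x)}.

Section Manifold.
Variables (D : set V) (p : nat).

Definition L2re (y z : V -> R[i]) : R := complex.Re (cint D (fun x => y x * (z x)^*)).

Definition imul (u : V -> R[i]) : V -> R[i] := fun x => 'i * u x.

Definition inH (y : 'I_p -> V -> R[i]) : Prop := forall j, H10 D (y j).

Definition sphere (N : R) (phi : V -> R[i]) : Prop :=
  H10 D phi /\ rint D (fun x => abs2 (phi x)) = N.

Definition tangent_sphere (phi z : V -> R[i]) : Prop :=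
  H10 D z /\ complex.Re (cint D (fun x => z x * (phi x)^*)) = 0.

Definition oblique (N : 'I_p -> R) (phi : 'I_p -> V -> R[i]) : Prop :=
  forall j, sphere (N j) (phi j).

Definition tangentOB (phi xi : 'I_p -> V -> R[i]) : Prop :=
  forall j, tangent_sphere (phi j) (xi j).

Definition vertical (phi nu : 'I_p -> V -> R[i]) : Prop :=
  exists sigma : 'I_p -> R, nu = fun j x => 'i * phi j x * (sigma j)%:C%C.

(* product metric g(y, z) = sum_j < G_j y_j, z_j >, where
   Gpair j y z stands for the real duality pairing < G_{phi,j} y, z > *)
Definition prod_metric (Gpair : 'I_p -> (V -> R[i]) -> (V -> R[i]) -> R)
    (y z : 'I_p -> V -> R[i]) : R :=
  \sum_(j < p) Gpair j (y j) (z j).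

Definition horizontal (g : ('I_p -> V -> R[i]) -> ('I_p -> V -> R[i]) -> R)
    (phi : 'I_p -> V -> R[i]) : set ('I_p -> V -> R[i]) :=
  [set xi | tangentOB phi xi /\ forall nu, vertical phi nu -> g xi nu = 0].

Definition horizontalL (phi : 'I_p -> V -> R[i]) : set ('I_p -> V -> R[i]) :=
  [set xi | inH xi /\ forall j, cint D (fun x => phi j x * (xi j x)^*) = 0].

(* G : H^1_0 -> H^{-1} linear (over R), given through its pairing
   b(y, z) = < G y, z >:  well defined on a.e.-classes, linear in y, and
   for each y the map z |-> < G y, z > is R-linear and H^1-bounded. *)
Definition op_H10_Hm1 (b : (V -> R[i]) -> (V -> R[i]) -> R) : Prop :=
  (forall y y' z, H10 D y -> H10 D y' -> H10 D z -> ae_eq D y y' -> b y z = b y' z) /\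
  (forall (a : R) y y' z, H10 D y -> H10 D y' -> H10 D z ->
     b (fun x => (a%:C)%C * y x + y' x) z = a * b y z + b y' z) /\
  (forall y, H10 D y ->
     (forall (a : R) z z', H10 D z -> H10 D z' ->
        b y (fun x => (a%:C)%C * z x + z' x) = a * b y z + b y z') /\
     exists C : R, forall z w, H10 D z -> weak_grad D z w ->
        (((b y z) ^+ 2)%:E <= C%:E * H1norm2 D z w)%E).

Definition riemannian_at (g : ('I_p -> V -> R[i]) -> ('I_p -> V -> R[i]) -> R)
    (phi : 'I_p -> V -> R[i]) : Prop :=
  (forall xi eta, tangentOB phi xi -> tangentOB phi eta -> g xi eta = g eta xi) /\
  (forall xi, tangentOB phi xi -> ~ (forall j, ae_eq D (xi j) (fun=> 0)) ->
     0 < g xi xi).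

End Manifold.
End Sobolev.

(* Main.v *)
Require Import Defs.
From mathcomp Require Import all_boot all_algebra.
From mathcomp Require Import all_classical all_reals all_analysis.
From mathcomp Require Import complex.
From mathcomp Require Import ring lra.
From mathcomp Require Import measurable_realfun.
Import GRing.Theory Num.Theory numFieldNormedType.Exports.
Import order.Order.TTheory.
Set Implicit Arguments.
Unset Strict Implicit.
Unset Printing Implicit Defensive.
Local Open Scope ring_scope.
Local Open Scope classical_set_scope.


Lemma bigcup_count d (T : sigmaRingType d) (I : countType) (F : I -> set T) :
  (forall i, measurable (F i)) -> measurable (\bigcup_i F i).
Proof.
move=> mF.
have -> : \bigcup_i F i = \bigcup_(n in setT) (fun n : nat => match @unpickle I n with Some i => F i | None => set0 end) n.
  apply/seteqP; split.
    move=> x [i _ Fx]; exists (pickle i) => //; by rewrite pickleK.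
  move=> x [n _]; case: (unpickle n) => [i Fx|//]; by exists i.
apply: bigcup_measurable => n _; case: (unpickle n) => //.
Qed.

Definition base_for (T : topologicalType) d (M : measurableType d) (f : M -> T)
  (I : countType) (B : I -> set T) :=
  (forall i, measurable (f @^-1` B i)) /\
  (forall x A, nbhs x A -> exists i, B i x /\ B i `<=` A).

Lemma base_open (T : topologicalType) d (M : measurableType d) (f : M -> T)
  (I : countType) (B : I -> set T) : base_for f B ->
  forall A, open A -> measurable (f @^-1` A).
Proof.
move=> [mB bB] A oA.
have -> : f @^-1` A = \bigcup_i (if pselect (B i `<=` A) is left _ then f @^-1` B i else set0).
  apply/seteqP; split.
    move=> x Ax; have [i [Bi BA]] := bB _ _ (open_nbhs_nbhs (conj oA Ax)).
    exists i => //; case: pselect => // -[]; exact: BA.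
  move=> x [i _]; case: pselect => // BA; exact: BA.
apply: bigcup_count => i; case: pselect => // _.
Qed.

Section Rbase.
Variable R : realType.
Definition Rbox (q : rat * rat) : set R := `]ratr q.1, ratr q.2[.

Lemma R_base : base_for (fun x : measurableTypeR R => (x : R)) Rbox.
Proof.
split.
  move=> q; exact: measurable_itv.
move=> x A /nbhs_ballP [e e0 eA].
have [a] : exists q : rat, ratr q \in `]x - e, x[%R.
  by apply: (@rat_in_itvoo R); rewrite ltrBlDr ltrDl.
rewrite in_itv /= => /andP[a1 a2].
have [b] : exists q : rat, ratr q \in `]x, x + e[%R.
  by apply: (@rat_in_itvoo R); rewrite ltrDl.
rewrite in_itv /= => /andP[b1 b2].
exists (a, b); split.
  by rewrite /Rbox /= in_itv /= a2 b1.
move=> y; rewrite /Rbox /= in_itv /= => /andP[ya yb]; apply: eA.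
rewrite /ball /= ltr_distlC; apply/andP; split; lra.
Qed.
End Rbase.

Lemma prod_base (T1 T2 : topologicalType) d1 d2 (M1 : measurableType d1)
  (M2 : measurableType d2) (f1 : M1 -> T1) (f2 : M2 -> T2)
  (I1 I2 : countType) (B1 : I1 -> set T1) (B2 : I2 -> set T2) :
  base_for f1 B1 -> base_for f2 B2 ->
  base_for (fun p : M1 * M2 => ((f1 p.1, f2 p.2) : T1 * T2))
    (fun ij : I1 * I2 => B1 ij.1 `*` B2 ij.2).
Proof.
move=> [m1 b1] [m2 b2]; split.
  move=> [i j] /=.
  have -> : (fun p : M1 * M2 => ((f1 p.1, f2 p.2) : T1 * T2)) @^-1` (B1 i `*` B2 j)
     = (f1 @^-1` B1 i) `*` (f2 @^-1` B2 j) by [].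
  exact: measurableX.
move=> x A [[U V] /= [nU nV] UVA].
have [i [Bi BU]] := b1 _ _ nU.
have [j [Bj BV]] := b2 _ _ nV.
exists (i, j); split => //= y [/= y1 y2]; apply: UVA; split; [exact: BU|exact: BV].
Qed.
Lemma E2_open_meas (R : realType) (D : set (sV (E2 R))) : open D -> measurable (onD D).
Proof.
move=> oD.
have := base_open (prod_base (R_base R) (R_base R)) oD.
congr measurable; apply/seteqP; split => -[a b] //.
Qed.
Lemma E3_open_meas (R : realType) (D : set (sV (E3 R))) : open D -> measurable (onD D).
Proof.
move=> oD.
have := base_open (prod_base (prod_base (R_base R) (R_base R)) (R_base R)) oD.
congr measurable; apply/seteqP; split => -[[a b] c] //.
Qed.


Lemma bounded_getM (R : realType) (V : normedModType R) (D : set V) :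
  bounded_set D -> exists M : R, 0 <= M /\ forall x, D x -> `|x| <= M.
Proof.
move=> [M0 [M0r HM]].
exists (`|M0| + 1); split; first by rewrite addr_ge0.
move=> x Dx; apply: (HM (`|M0| + 1)) => //.
rewrite (le_lt_trans (real_ler_norm M0r)) // ltrDl //.
Qed.

Lemma cont_bounded_on (R : realType) (V : normedModType R) (K : set V) (f : V -> R) :
  compact K -> continuous f -> exists M : R, forall x, K x -> `|f x| <= M.
Proof.
move=> cK cf.
have := compact_bounded (continuous_compact (continuous_subspaceT cf) cK).
move=> /bounded_getM [M [_ HM]]; exists M => x Kx; apply: HM; by exists x.
Qed.

Lemma E2_box (R : realType) (D : set (sV (E2 R))) : bounded_set D ->
  exists K : set (sV (E2 R)), compact K /\ D `<=` K /\ measurable (onD K) /\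
    (smu (E2 R) (onD K) < +oo)%E.
Proof.
move=> /bounded_getM [M [M0 HM]].
exists (`[-M, M] `*` `[-M, M]); split.
  have := @compact_setX R R _ _ (@segment_compact R (-M) M) (@segment_compact R (-M) M).
  exact.
split.
  move=> [a b] /HM; rewrite prod_normE /= ge_max => /andP[ha hb].
  by split; rewrite /= in_itv /= -ler_norml.
have mI : measurable (`[-M, M] : set (measurableTypeR R)) by exact: measurable_itv.
split; first exact: measurableX.
rewrite /= /mu2 product_measure1E //.
have L : lebesgue_measure (`[-M, M] : set R) = (M + M)%:E.
  rewrite lebesgue_measure_itv /=; case: ifP; first by rewrite opprK EFinD.
  rewrite lte_fin => /negbT; rewrite -leNgt => h; have -> : M = 0 by lra.
  by rewrite addr0.
rewrite -[X in (X * _ < _)%E]/(lebesgue_measure (`[-M, M] : set R)).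
rewrite -[X in (_ * X < _)%E]/(lebesgue_measure (`[-M, M] : set R)).
by rewrite L -EFinM ltry.
Qed.

Lemma E3_box (R : realType) (D : set (sV (E3 R))) : bounded_set D ->
  exists K : set (sV (E3 R)), compact K /\ D `<=` K /\ measurable (onD K) /\
    (smu (E3 R) (onD K) < +oo)%E.
Proof.
move=> /bounded_getM [M [M0 HM]].
exists ((`[-M, M] `*` `[-M, M]) `*` `[-M, M]); split.
  have := @compact_setX _ R _ _ (@compact_setX R R _ _ (@segment_compact R (-M) M) (@segment_compact R (-M) M)) (@segment_compact R (-M) M).
  exact.
split.
  move=> [[a b] c] /HM; rewrite !prod_normE /= !ge_max => /andP[/andP[ha hb] hc].
  by split; [split|]; rewrite /= in_itv /= -ler_norml.
have mI : measurable (`[-M, M] : set (measurableTypeR R)) by exact: measurable_itv.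
split; first by apply: measurableX => //; exact: measurableX.
rewrite /= /mu3 product_measure1E //; last exact: measurableX.
rewrite -[X in (X * _ < _)%E]/((@lebesgue_measure R \x @lebesgue_measure R)%E (`[-M, M] `*` `[-M, M])).
rewrite product_measure1E //.
have L : lebesgue_measure (`[-M, M] : set R) = (M + M)%:E.
  rewrite lebesgue_measure_itv /=; case: ifP; first by rewrite opprK EFinD.
  rewrite lte_fin => /negbT; rewrite -leNgt => h; have -> : M = 0 by lra.
  by rewrite addr0.
rewrite -[X in (X * _ * _ < _)%E]/(lebesgue_measure (`[-M, M] : set R)).
rewrite -[X in (_ * X * _ < _)%E]/(lebesgue_measure (`[-M, M] : set R)).
rewrite -[X in (_ * X < _)%E]/(lebesgue_measure (`[-M, M] : set R)).
by rewrite L -!EFinM ltry.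
Qed.


Section Generic.
Variables (R : realType) (E : euclid R) (D : set (sV E)).
Hypothesis HOM : forall A : set (sV E), open A -> measurable (onD A).
Hypothesis oD : open D.
Hypothesis HK : exists K : set (sV E), compact K /\ D `<=` K /\ measurable (onD K) /\
    (@smu R E (onD K) < +oo)%E.

Local Notation V := (sV E).
Local Notation mu := (@smu R E).
Local Notation toV := (@stoV R E).
Local Notation Om := (onD D).

Lemma mOm : measurable Om. Proof. exact: HOM. Qed.

Lemma mfin : (mu Om < +oo)%E.
Proof.
have [K [_ [DK [mK fK]]]] := HK.
apply: le_lt_trans fK; apply: le_measure; rewrite ?inE //; first exact: mOm.
by move=> x; apply: DK.
Qed.

Lemma cont_bnd (f : V -> R) : continuous f -> exists M, forall x, D x -> `|f x| <= M.
Proof.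
move=> cf; have [K [cK [DK _]]] := HK.
have := compact_bounded (continuous_compact (continuous_subspaceT cf) cK).
move=> [M0 [M0r HM]]; exists (`|M0| + 1) => x Dx.
apply: (HM (`|M0| + 1)); last by exists x => //; apply: DK.
rewrite (le_lt_trans (real_ler_norm M0r)) // ltrDl //.
Qed.

Lemma cont_meas (f : V -> R) : continuous f -> measurable_fun Om (f \o toV).
Proof.
move=> /continuousP cf; apply: (measurability _ (measurable_realfun.RGenOpens.measurableE R)).
move=> _ [_ [a [b ->] <-]].
have -> : Om `&` (f \o toV) @^-1` `]a, b[ = onD (D `&` f @^-1` `]a, b[) by [].
apply: HOM; apply: openI => //; apply: cf; exact: interval_open.
Qed.

Definition Ir (f : V -> R) := mu.-integrable Om (EFin \o (f \o toV)).
Definition SQ (f : V -> R) := measurable_fun Om (f \o toV) /\ Ir (fun x => f x ^+ 2).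

Lemma Ir_cst (k : R) : Ir (fun=> k).
Proof.
apply/integrableP; split; first by apply/measurable_realfun.measurable_EFinP; exact: (measurable_cst k).
rewrite /= (eq_integral (fun=> `|k|%:E)) //.
rewrite integral_cst; last exact: mOm.
by apply: (lte_mul_pinfty _ _ mfin); rewrite ?lee_fin.

Qed.

Lemma Ir_meas f : Ir f -> measurable_fun Om (f \o toV).
Proof. by move=> /integrableP [/measurable_realfun.measurable_EFinP]. Qed.

Lemma IrD f g : Ir f -> Ir g -> Ir (fun x => f x + g x).
Proof. move=> If Ig; exact: (integrableD mOm If Ig). Qed.

Lemma IrZ (a : R) f : Ir f -> Ir (fun x => a * f x).
Proof.
move=> If; have := integrableZl mOm a If.
by apply: eq_integrable; [exact: mOm|].
Qed.

Lemma Ir_le (f g : V -> R) : measurable_fun Om (f \o toV) -> Ir g ->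
  (forall x, D x -> `|f x| <= g x) -> Ir f.
Proof.
move=> mf Ig fg; apply: (le_integrable mOm _ _ Ig).
  exact/measurable_realfun.measurable_EFinP.
move=> x Dx /=; rewrite lee_fin.
by rewrite (le_trans (fg _ Dx)) // ler_norm.
Qed.

Lemma SQ_mul f g : SQ f -> SQ g -> Ir (fun x => f x * g x).
Proof.
move=> [mf If] [mg Ig]; apply: (Ir_le _ (IrD If Ig)).
  exact: measurable_funM.
move=> x _; rewrite normrM.
have h1 := sqr_ge0 (`|f x| - `|g x|).
have -> : f x ^+ 2 = `|f x| ^+ 2 by rewrite real_normK ?num_real.
have -> : g x ^+ 2 = `|g x| ^+ 2 by rewrite real_normK ?num_real.
have := normr_ge0 (f x); have := normr_ge0 (g x). nra.
Qed.


Lemma Ir_eint (f : V -> R) : (forall x, 0 <= f x) ->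
  Ir f <-> measurable_fun Om (f \o toV) /\ (eint D f < +oo)%E.
Proof.
move=> f0; have E1 : eint D f = (\int[mu]_(x in Om) `|(EFin \o (f \o toV)) x|)%E.
  by apply: eq_integral => x _ /=; rewrite ger0_norm.
rewrite E1; split.
  by move=> /integrableP [/measurable_EFinP mf fi].
by move=> [mf fi]; apply/integrableP; split => //; exact/measurable_EFinP.
Qed.

Lemma SQ_add (f g : V -> R) : SQ f -> SQ g -> SQ (fun x => f x + g x).
Proof.
move=> [mf If] [mg Ig]; split; first exact: measurable_funD.
apply: (Ir_le _ (IrD (IrZ 2 If) (IrZ 2 Ig))).
  by apply: measurable_funX; exact: measurable_funD.
move=> x _; rewrite ger0_norm ?sqr_ge0 //.
have := sqr_ge0 (f x - g x); nra.
Qed.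

Lemma SQ_scale (a : R) (f : V -> R) : SQ f -> SQ (fun x => a * f x).
Proof.
move=> [mf If]; split.
  by apply: measurable_funM => //; exact: measurable_cst.
apply: (Ir_le _ (IrZ (a ^+ 2) If)).
  by apply: measurable_funX; apply: measurable_funM => //; exact: measurable_cst.
by move=> x _; rewrite ger0_norm ?sqr_ge0 // exprMn.
Qed.

Lemma SQ_cont (f : V -> R) : continuous f -> SQ f.
Proof.
move=> cf; have [M HM] := cont_bnd cf; split; first exact: cont_meas.
apply: (Ir_le _ (Ir_cst (M ^+ 2))).
  by apply: measurable_funX; exact: cont_meas.
move=> x Dx; rewrite ger0_norm ?sqr_ge0 //.
have h := HM _ Dx; rewrite -real_normK ?num_real //.
by rewrite lerXn2r // ?nnegrE // (le_trans _ h).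
Qed.

Lemma L2_SQ (u : V -> R[i]) :
  L2 D u <-> SQ (fun x => complex.Re (u x)) /\ SQ (fun x => complex.Im (u x)).
Proof.
have a0 : forall x, 0 <= abs2 (u x) by move=> x; rewrite /abs2 addr_ge0 ?sqr_ge0.
split.
  move=> [mr [mi fi]].
  have Ia : Ir (fun x => abs2 (u x)).
    apply/Ir_eint => //; split => //.
    by apply: measurable_funD; apply: measurable_funX.
  split; split => //; apply: (Ir_le _ Ia).
  - exact: measurable_funX.
  - by move=> x _; rewrite ger0_norm ?sqr_ge0 // /abs2 lerDl sqr_ge0.
  - exact: measurable_funX.
  - by move=> x _; rewrite ger0_norm ?sqr_ge0 // /abs2 lerDr sqr_ge0.
move=> [[mr Ir] [mi Ii]]; split => //; split => //.
have := IrD Ir Ii; move=> /Ir_eint; by move=> /(_ a0) [].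
Qed.


Lemma rintD (f g : V -> R) : Ir f -> Ir g ->
  rint D (fun x => f x + g x) = rint D f + rint D g.
Proof. move=> If Ig; exact: (RintegralD mOm If Ig). Qed.

Lemma rintZ (a : R) (f : V -> R) : Ir f -> rint D (fun x => a * f x) = a * rint D f.
Proof. move=> If; exact: (RintegralZl a mOm If). Qed.

Lemma rint_ext (f g : V -> R) : (forall x, f x = g x) -> rint D f = rint D g.
Proof. by move=> fg; rewrite /rint; congr Rintegral; apply: funext => x; rewrite fg. Qed.

Lemma Ir_ext (f g : V -> R) : (forall x, f x = g x) -> Ir f -> Ir g.
Proof. by move=> fg; have -> : g = f by apply: funext => x; rewrite fg. Qed.

Lemma SQ_ext (f g : V -> R) : (forall x, f x = g x) -> SQ f -> SQ g.
Proof. by move=> fg; have -> : g = f by apply: funext => x; rewrite fg. Qed.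

Local Notation e := (@sbasis R E).

Lemma derD (f g : V -> R) x v : derivable f x v -> derivable g x v ->
  'D_v (fun y => f y + g y) x = 'D_v f x + 'D_v g x.
Proof. move=> df dg; exact: (deriveD df dg). Qed.

Lemma derZ (a : R) (f : V -> R) x v : derivable f x v ->
  'D_v (fun y => a * f y) x = a * 'D_v f x.
Proof. move=> df; exact: (deriveZ a df). Qed.

Lemma dvD (f g : V -> R) x v : derivable f x v -> derivable g x v ->
  derivable (fun y => f y + g y) x v.
Proof. move=> df dg; exact (derivableD df dg). Qed.

Lemma dvZ (a : R) (f : V -> R) x v : derivable f x v ->
  derivable (fun y => a * f y) x v.
Proof. move=> df; exact (@derivableZ _ _ _ _ a _ _ df). Qed.

Lemma pderD (f g : V -> R) l : smooth f -> smooth g ->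
  pder l (fun x => f x + g x) = (fun x => pder l f x + pder l g x).
Proof.
move=> sf sg; elim: l => [//|k l IH] /=.
rewrite IH; apply: funext => x.
have [_ df] := sf l; have [_ dg] := sg l.
by rewrite derD.
Qed.

Lemma pderZ (a : R) (f : V -> R) l : smooth f ->
  pder l (fun x => a * f x) = (fun x => a * pder l f x).
Proof.
move=> sf; elim: l => [//|k l IH] /=.
rewrite IH; apply: funext => x.
have [_ df] := sf l.
by rewrite derZ.
Qed.

Lemma smoothD (f g : V -> R) : smooth f -> smooth g -> smooth (fun x => f x + g x).
Proof.
move=> sf sg l; rewrite pderD //; have [cf df] := sf l; have [cg dg] := sg l.
split; first by move=> x; exact (continuousD (cf x) (cg x)).
by move=> k x; apply: dvD.
Qed.

Lemma smoothZ (a : R) (f : V -> R) : smooth f -> smooth (fun x => a * f x).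
Proof.
move=> sf l; rewrite pderZ //; have [cf df] := sf l.
split; first by move=> x; exact (continuousM (@cst_continuous _ _ a x) (cf x)).
by move=> k x; apply: dvZ.
Qed.

Lemma smooth_ext (f g : V -> R) : (forall x, f x = g x) -> smooth f -> smooth g.
Proof. by move=> fg; have -> : g = f by apply: funext => x; rewrite fg. Qed.


Definition lin4 (a1 a2 a3 a4 : R) (f1 f2 f3 f4 : V -> R) : V -> R :=
  fun x => a1 * f1 x + a2 * f2 x + (a3 * f3 x + a4 * f4 x).

Lemma SQ_lin4 a1 a2 a3 a4 f1 f2 f3 f4 : SQ f1 -> SQ f2 -> SQ f3 -> SQ f4 ->
  SQ (lin4 a1 a2 a3 a4 f1 f2 f3 f4).
Proof.
move=> s1 s2 s3 s4; apply: SQ_add; apply: SQ_add; exact: SQ_scale.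
Qed.

Lemma Ir_lin4 a1 a2 a3 a4 f1 f2 f3 f4 : Ir f1 -> Ir f2 -> Ir f3 -> Ir f4 ->
  Ir (lin4 a1 a2 a3 a4 f1 f2 f3 f4).
Proof.
move=> s1 s2 s3 s4; apply: IrD; apply: IrD; exact: IrZ.
Qed.

Lemma rint_lin4 a1 a2 a3 a4 f1 f2 f3 f4 : Ir f1 -> Ir f2 -> Ir f3 -> Ir f4 ->
  rint D (lin4 a1 a2 a3 a4 f1 f2 f3 f4) =
  a1 * rint D f1 + a2 * rint D f2 + (a3 * rint D f3 + a4 * rint D f4).
Proof.
move=> s1 s2 s3 s4; rewrite /lin4.
rewrite (@rintD (fun x => a1 * f1 x + a2 * f2 x) (fun x => a3 * f3 x + a4 * f4 x));
  [|by apply: IrD; exact: IrZ|by apply: IrD; exact: IrZ].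
rewrite (@rintD (fun x => a1 * f1 x) (fun x => a2 * f2 x)); [|exact: IrZ|exact: IrZ].
rewrite (@rintD (fun x => a3 * f3 x) (fun x => a4 * f4 x)); [|exact: IrZ|exact: IrZ].
by rewrite !rintZ.
Qed.

Lemma smooth_lin4 a1 a2 a3 a4 f1 f2 f3 f4 : smooth f1 -> smooth f2 -> smooth f3 ->
  smooth f4 -> smooth (lin4 a1 a2 a3 a4 f1 f2 f3 f4).
Proof.
move=> s1 s2 s3 s4; apply: smoothD; apply: smoothD; exact: smoothZ.
Qed.

Lemma der_lin4 a1 a2 a3 a4 (f1 f2 f3 f4 : V -> R) x v :
  derivable f1 x v -> derivable f2 x v -> derivable f3 x v -> derivable f4 x v ->
  'D_v (lin4 a1 a2 a3 a4 f1 f2 f3 f4) x =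
  a1 * 'D_v f1 x + a2 * 'D_v f2 x + (a3 * 'D_v f3 x + a4 * 'D_v f4 x).
Proof.
move=> d1 d2 d3 d4; rewrite /lin4.
rewrite (@derD (fun x => a1 * f1 x + a2 * f2 x) (fun x => a3 * f3 x + a4 * f4 x));
  [|by apply: dvD; exact: dvZ|by apply: dvD; exact: dvZ].
rewrite (@derD (fun x => a1 * f1 x) (fun x => a2 * f2 x)); [|exact: dvZ|exact: dvZ].
rewrite (@derD (fun x => a3 * f3 x) (fun x => a4 * f4 x)); [|exact: dvZ|exact: dvZ].
by rewrite !derZ.
Qed.

Lemma wp_lin4 a1 a2 a3 a4 (f1 f2 f3 f4 h1 h2 h3 h4 g k : V -> R) :
  Ir (fun x => f1 x * g x) -> Ir (fun x => f2 x * g x) ->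
  Ir (fun x => f3 x * g x) -> Ir (fun x => f4 x * g x) ->
  Ir (fun x => h1 x * k x) -> Ir (fun x => h2 x * k x) ->
  Ir (fun x => h3 x * k x) -> Ir (fun x => h4 x * k x) ->
  rint D (fun x => f1 x * g x) = - rint D (fun x => h1 x * k x) ->
  rint D (fun x => f2 x * g x) = - rint D (fun x => h2 x * k x) ->
  rint D (fun x => f3 x * g x) = - rint D (fun x => h3 x * k x) ->
  rint D (fun x => f4 x * g x) = - rint D (fun x => h4 x * k x) ->
  rint D (fun x => lin4 a1 a2 a3 a4 f1 f2 f3 f4 x * g x) =
  - rint D (fun x => lin4 a1 a2 a3 a4 h1 h2 h3 h4 x * k x).
Proof.
move=> I1 I2 I3 I4 J1 J2 J3 J4 e1 e2 e3 e4.
rewrite (@rint_ext _ (lin4 a1 a2 a3 a4 (fun x => f1 x * g x) (fun x => f2 x * g x)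
  (fun x => f3 x * g x) (fun x => f4 x * g x))); last by move=> x; rewrite /lin4; ring.
rewrite (@rint_ext (fun x => lin4 a1 a2 a3 a4 h1 h2 h3 h4 x * k x)
  (lin4 a1 a2 a3 a4 (fun x => h1 x * k x) (fun x => h2 x * k x)
  (fun x => h3 x * k x) (fun x => h4 x * k x))); last by move=> x; rewrite /lin4; ring.
rewrite !rint_lin4 // e1 e2 e3 e4; ring.
Qed.


Lemma ReCL (c1 c2 p q : R[i]) : complex.Re (c1 * p + c2 * q) =
  complex.Re c1 * complex.Re p + (- complex.Im c1) * complex.Im p +
  (complex.Re c2 * complex.Re q + (- complex.Im c2) * complex.Im q).
Proof. case: c1 => a b; case: c2 => c d; case: p => r s; case: q => t u /=. ring. Qed.
Lemma ImCL (c1 c2 p q : R[i]) : complex.Im (c1 * p + c2 * q) =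
  complex.Im c1 * complex.Re p + complex.Re c1 * complex.Im p +
  (complex.Im c2 * complex.Re q + complex.Re c2 * complex.Im q).
Proof. case: c1 => a b; case: c2 => c d; case: p => r s; case: q => t u /=. ring. Qed.
Lemma CL_eq (c1 c2 : R[i]) (r s t u : R) :
  c1 * Complex r s + c2 * Complex t u =
  Complex (complex.Re c1 * r + (- complex.Im c1) * s + (complex.Re c2 * t + (- complex.Im c2) * u))
          (complex.Im c1 * r + complex.Re c1 * s + (complex.Im c2 * t + complex.Re c2 * u)).
Proof. case: c1 => a b; case: c2 => c d /=. congr Complex; ring. Qed.

Definition comb (c1 c2 : R[i]) (u v : V -> R[i]) : V -> R[i] := fun x => c1 * u x + c2 * v x.

Lemma L2_lin c1 c2 u v : L2 D u -> L2 D v -> L2 D (comb c1 c2 u v).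
Proof.
move=> /L2_SQ [ur ui] /L2_SQ [vr vi]; apply/L2_SQ; split.
  apply: (SQ_ext _ (SQ_lin4 (complex.Re c1) (- complex.Im c1) (complex.Re c2) (- complex.Im c2) ur ui vr vi)).
  by move=> x; rewrite /lin4 /comb ReCL.
apply: (SQ_ext _ (SQ_lin4 (complex.Im c1) (complex.Re c1) (complex.Im c2) (complex.Re c2) ur ui vr vi)).
by move=> x; rewrite /lin4 /comb ImCL.
Qed.

Lemma ctest_lin c1 c2 u v : ctest D u -> ctest D v -> ctest D (comb c1 c2 u v).
Proof.
move=> [ur [ui [cu su]]] [vr [vi [cv sv]]]; split.
  apply: (smooth_ext _ (smooth_lin4 (complex.Re c1) (- complex.Im c1) (complex.Re c2) (- complex.Im c2) ur ui vr vi)).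
  by move=> x; rewrite /lin4 /comb ReCL.
split.
  apply: (smooth_ext _ (smooth_lin4 (complex.Im c1) (complex.Re c1) (complex.Im c2) (complex.Re c2) ur ui vr vi)).
  by move=> x; rewrite /lin4 /comb ImCL.
have sub : [set x | comb c1 c2 u v x != 0] `<=` [set x | u x != 0] `|` [set x | v x != 0].
  move=> x /= h; case: (eqVneq (u x) 0) => [u0|]; last by left.
  case: (eqVneq (v x) 0) => [v0|]; last by right.
  by move: h; rewrite /comb u0 v0 !mulr0 addr0 eqxx.
have csub := closure_subset sub; rewrite closureU in csub.
split.
  apply: (subclosed_compact _ (compactU cu cv) csub); exact: closed_closure.
by move=> x /csub [/su|/sv].
Qed.

Lemma cpder_lin c1 c2 u v k : ctest D u -> ctest D v ->
  cpder k (comb c1 c2 u v) = comb c1 c2 (cpder k u) (cpder k v).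
Proof.
move=> [ur [ui _]] [vr [vi _]]; apply: funext => x; rewrite /comb /cpder CL_eq.
have [_ dur] := ur [::]; have [_ dui] := ui [::].
have [_ dvr] := vr [::]; have [_ dvi] := vi [::].
congr Complex.
  have -> : (fun y => complex.Re (c1 * u y + c2 * v y)) = lin4 (complex.Re c1) (- complex.Im c1)
     (complex.Re c2) (- complex.Im c2) (fun y => complex.Re (u y)) (fun y => complex.Im (u y))
     (fun y => complex.Re (v y)) (fun y => complex.Im (v y)).
    by apply: funext => y; rewrite /lin4 ReCL.
  by rewrite der_lin4.
have -> : (fun y => complex.Im (c1 * u y + c2 * v y)) = lin4 (complex.Im c1) (complex.Re c1)
   (complex.Im c2) (complex.Re c2) (fun y => complex.Re (u y)) (fun y => complex.Im (u y))
   (fun y => complex.Re (v y)) (fun y => complex.Im (v y)).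
  by apply: funext => y; rewrite /lin4 ImCL.
by rewrite der_lin4.
Qed.


Lemma wgrad_lin c1 c2 u v wu wv : L2 D u -> L2 D v -> weak_grad D u wu -> weak_grad D v wv ->
  weak_grad D (comb c1 c2 u v) (fun k => comb c1 c2 (wu k) (wv k)).
Proof.
move=> /L2_SQ [ur ui] /L2_SQ [vr vi] gu gv k.
have [Lwu pu] := gu k; have [Lwv pv] := gv k.
split; first exact: L2_lin.
move=> psi [sp csp].
have [cp _] := sp [::]; have [cdp _] := sp [:: k].
have Sp : SQ psi := SQ_cont cp.
have Sdp : SQ ('D_(e k) psi) := SQ_cont cdp.
have [pu1 pu2] := pu psi (conj sp csp).
have [pv1 pv2] := pv psi (conj sp csp).
move: Lwu Lwv => /L2_SQ [wur wui] /L2_SQ [wvr wvi].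
split.
  rewrite (@rint_ext _ (fun x => lin4 (complex.Re c1) (- complex.Im c1) (complex.Re c2) (- complex.Im c2)
     (fun x => complex.Re (u x)) (fun x => complex.Im (u x)) (fun x => complex.Re (v x))
     (fun x => complex.Im (v x)) x * 'D_(e k) psi x)); last by move=> x; rewrite /lin4 /comb ReCL.
  rewrite (@rint_ext (fun x => complex.Re (comb c1 c2 (wu k) (wv k) x) * psi x)
     (fun x => lin4 (complex.Re c1) (- complex.Im c1) (complex.Re c2) (- complex.Im c2)
     (fun x => complex.Re (wu k x)) (fun x => complex.Im (wu k x)) (fun x => complex.Re (wv k x))
     (fun x => complex.Im (wv k x)) x * psi x)); last by move=> x; rewrite /lin4 /comb ReCL.
  by apply: wp_lin4; try exact: SQ_mul.
rewrite (@rint_ext _ (fun x => lin4 (complex.Im c1) (complex.Re c1) (complex.Im c2) (complex.Re c2)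
   (fun x => complex.Re (u x)) (fun x => complex.Im (u x)) (fun x => complex.Re (v x))
   (fun x => complex.Im (v x)) x * 'D_(e k) psi x)); last by move=> x; rewrite /lin4 /comb ImCL.
rewrite (@rint_ext (fun x => complex.Im (comb c1 c2 (wu k) (wv k) x) * psi x)
   (fun x => lin4 (complex.Im c1) (complex.Re c1) (complex.Im c2) (complex.Re c2)
   (fun x => complex.Re (wu k x)) (fun x => complex.Im (wu k x)) (fun x => complex.Re (wv k x))
   (fun x => complex.Im (wv k x)) x * psi x)); last by move=> x; rewrite /lin4 /comb ImCL.
by apply: wp_lin4; try exact: SQ_mul.
Qed.


Definition CM (f : V -> R[i]) := measurable_fun Om ((fun x => complex.Re (f x)) \o toV) /\
  measurable_fun Om ((fun x => complex.Im (f x)) \o toV).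

Lemma ReB (a b : R[i]) : complex.Re (a - b) = complex.Re a - complex.Re b.
Proof. by case: a => ? ?; case: b. Qed.
Lemma ImB (a b : R[i]) : complex.Im (a - b) = complex.Im a - complex.Im b.
Proof. by case: a => ? ?; case: b. Qed.

Lemma abs2_ge0 (z : R[i]) : 0 <= abs2 z.
Proof. by rewrite /abs2 addr_ge0 ?sqr_ge0. Qed.

Lemma abs2_meas f g : CM f -> CM g -> measurable_fun Om ((fun x => abs2 (f x - g x)) \o toV).
Proof.
move=> [fr fi] [gr gi].
have -> : (fun x => abs2 (f x - g x)) \o toV = (fun x => (complex.Re (f (toV x)) - complex.Re (g (toV x))) ^+ 2
   + (complex.Im (f (toV x)) - complex.Im (g (toV x))) ^+ 2).
  by apply: funext => x; rewrite /abs2 /= ReB ImB.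
by apply: measurable_funD; apply: measurable_funX; apply: measurable_funB.
Qed.

Lemma CM_L2 u : L2 D u -> CM u.
Proof. by move=> [? [? _]]. Qed.

Lemma CM_ctest u : ctest D u -> CM u.
Proof.
move=> [ur [ui _]]; have [cr _] := ur [::]; have [ci _] := ui [::].
split; exact: cont_meas.
Qed.

Lemma CM_cpder k u : ctest D u -> CM (cpder k u).
Proof.
move=> [ur [ui _]]; have [cr _] := ur [:: k]; have [ci _] := ui [:: k].
split; exact: cont_meas.
Qed.

Lemma abs2_comb_le (c1 c2 p q p' q' : R[i]) :
  abs2 (c1 * p + c2 * q - (c1 * p' + c2 * q')) <=
  2 * abs2 c1 * abs2 (p - p') + 2 * abs2 c2 * abs2 (q - q').
Proof.
have -> : c1 * p + c2 * q - (c1 * p' + c2 * q') = c1 * (p - p') + c2 * (q - q') by ring.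
move: (p - p') (q - q') => P Q.
case: c1 => a b; case: c2 => c d; case: P => r s; case: Q => t u; rewrite /abs2 /=.
set x1 := a * r - b * s; set y1 := a * s + b * r.
set x2 := c * t - d * u; set y2 := c * u + d * t.
have e1 : (a ^+ 2 + b ^+ 2) * (r ^+ 2 + s ^+ 2) = x1 ^+ 2 + y1 ^+ 2 by rewrite /x1 /y1; ring.
have e2 : (c ^+ 2 + d ^+ 2) * (t ^+ 2 + u ^+ 2) = x2 ^+ 2 + y2 ^+ 2 by rewrite /x2 /y2; ring.
rewrite -!mulrA e1 e2.
have := sqr_ge0 (x1 - x2); have := sqr_ge0 (y1 - y2); nra.
Qed.

Lemma eint_le2 (F G H : V -> R) (K1 K2 : R) : 0 <= K1 -> 0 <= K2 ->
  (forall x, 0 <= G x) -> (forall x, 0 <= H x) ->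
  measurable_fun Om (F \o toV) -> measurable_fun Om (G \o toV) -> measurable_fun Om (H \o toV) ->
  (forall x, 0 <= F x <= K1 * G x + K2 * H x) ->
  (eint D F <= K1%:E * eint D G + K2%:E * eint D H)%E.
Proof.
move=> K10 K20 G0 H0 mF mG mH FGH.
apply: (@le_trans _ _ (eint D (fun x => K1 * G x + K2 * H x))).
  apply: ge0_le_integral; first exact: mOm.
  - by move=> x _; rewrite lee_fin; case/andP: (FGH (toV x)).
  - exact/measurable_EFinP.
  - apply/measurable_EFinP; apply: measurable_funD; apply: measurable_funM => //;
      exact: measurable_cst.
  - by move=> x _; rewrite lee_fin; case/andP: (FGH (toV x)).
rewrite /eint (eq_integral (fun x => (K1 * G (toV x))%:E + (K2 * H (toV x))%:E)%E); last by [].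
rewrite ge0_integralD; first last.
- apply/measurable_EFinP; apply: measurable_funM => //; exact: measurable_cst.
- by move=> x _; rewrite lee_fin mulr_ge0.
- apply/measurable_EFinP; apply: measurable_funM => //; exact: measurable_cst.
- by move=> x _; rewrite lee_fin mulr_ge0.
- exact: mOm.
rewrite [X in (X + _ <= _)%E](eq_integral (fun x => K1%:E * (G (toV x))%:E)%E) //.
rewrite [X in (_ + X <= _)%E](eq_integral (fun x => K2%:E * (H (toV x))%:E)%E) //.
rewrite ge0_integralZl; first last.
- by rewrite lee_fin.
- by move=> x _; rewrite lee_fin.
- exact/measurable_EFinP.
- exact: mOm.
rewrite ge0_integralZl; first last.
- by rewrite lee_fin.
- by move=> x _; rewrite lee_fin.
- exact/measurable_EFinP.
- exact: mOm.
by [].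
Qed.


Lemma CM_comb c1 c2 f g : CM f -> CM g -> CM (comb c1 c2 f g).
Proof.
move=> [fr fi] [gr gi]; split.
  have -> : (fun x => complex.Re (comb c1 c2 f g x)) \o toV =
    lin4 (complex.Re c1) (- complex.Im c1) (complex.Re c2) (- complex.Im c2)
     (fun x => complex.Re (f x)) (fun x => complex.Im (f x)) (fun x => complex.Re (g x))
     (fun x => complex.Im (g x)) \o toV.
    by apply: funext => x; rewrite /= /lin4 /comb ReCL.
  by apply: measurable_funD; apply: measurable_funD; apply: measurable_funM => //;
    exact: measurable_cst.
have -> : (fun x => complex.Im (comb c1 c2 f g x)) \o toV =
  lin4 (complex.Im c1) (complex.Re c1) (complex.Im c2) (complex.Re c2)
   (fun x => complex.Re (f x)) (fun x => complex.Im (f x)) (fun x => complex.Re (g x))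
   (fun x => complex.Im (g x)) \o toV.
  by apply: funext => x; rewrite /= /lin4 /comb ImCL.
by apply: measurable_funD; apply: measurable_funD; apply: measurable_funM => //;
  exact: measurable_cst.
Qed.

Lemma eint_ge0 (f : V -> R) : (forall x, 0 <= f x) -> (0 <= eint D f)%E.
Proof. by move=> f0; apply: integral_ge0 => x _; rewrite lee_fin. Qed.

Lemma eint_comb_le c1 c2 f g f' g' : CM f -> CM g -> CM f' -> CM g' ->
  (eint D (fun x => abs2 (comb c1 c2 f g x - comb c1 c2 f' g' x)%R) <=
   (2 * abs2 c1)%:E * eint D (fun x => abs2 (f x - f' x)%R) +
   (2 * abs2 c2)%:E * eint D (fun x => abs2 (g x - g' x)%R))%E.
Proof.
move=> cf cg cf' cg'; apply: eint_le2.
- by rewrite mulr_ge0 ?abs2_ge0.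
- by rewrite mulr_ge0 ?abs2_ge0.
- by move=> x; exact: abs2_ge0.
- by move=> x; exact: abs2_ge0.
- by apply: abs2_meas; exact: CM_comb.
- exact: abs2_meas.
- exact: abs2_meas.
- by move=> x; rewrite abs2_ge0 /= /comb abs2_comb_le.
Qed.

Lemma H1_lin_le c1 c2 a b wa wb u v wu wv :
  CM a -> CM b -> CM u -> CM v -> (forall k, CM (wa k)) -> (forall k, CM (wb k)) ->
  (forall k, CM (wu k)) -> (forall k, CM (wv k)) ->
  (H1dist2 D (comb c1 c2 a b) (fun k => comb c1 c2 (wa k) (wb k)) (comb c1 c2 u v)
     (fun k => comb c1 c2 (wu k) (wv k)) <=
   (2 * abs2 c1)%:E * H1dist2 D a wa u wu + (2 * abs2 c2)%:E * H1dist2 D b wb v wv)%E.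
Proof.
move=> ca cb cu cv cwa cwb cwu cwv; rewrite /H1dist2.
apply: le_trans.
  apply: leeD; first exact: eint_comb_le.
  apply: lee_sum => k _; exact: eint_comb_le.
have g0 : forall (f g : V -> R[i]), (0 <= eint D (fun x => abs2 (f x - g x)%R))%E.
  by move=> f g; apply: eint_ge0 => x; exact: abs2_ge0.
rewrite big_split /= -!ge0_sume_distrr; try by move=> k _; exact: g0.
rewrite (ge0_muleDr _ (g0 _ _)); last by apply: sume_ge0 => k _; exact: g0.
rewrite (ge0_muleDr _ (g0 _ _)); last by apply: sume_ge0 => k _; exact: g0.
by rewrite addeACA.
Qed.


Lemma H1dist2_ge0 u w v wv : (0 <= H1dist2 D u w v wv)%E.
Proof.
rewrite /H1dist2; apply: adde_ge0; first by apply: eint_ge0 => x; exact: abs2_ge0.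
by apply: sume_ge0 => k _; apply: eint_ge0 => x; exact: abs2_ge0.
Qed.

Lemma H10_lin c1 c2 u v : H10 D u -> H10 D v -> H10 D (comb c1 c2 u v).
Proof.
move=> [Lu [wu [gu [ps [tps cps]]]]] [Lv [wv [gv [ps' [tps' cps']]]]].
split; first exact: L2_lin.
exists (fun k => comb c1 c2 (wu k) (wv k)); split; first exact: wgrad_lin.
exists (fun n => comb c1 c2 (ps n) (ps' n)); split; first by move=> n; exact: ctest_lin.
have Hr := @cvgeD _ \oo _ _ _ _ ((2 * abs2 c1)%:E * 0)%E ((2 * abs2 c2)%:E * 0)%E isT (cvgeZl (y := (2 * abs2 c1)%:E) isT cps) (cvgeZl (y := (2 * abs2 c2)%:E) isT cps').
rewrite !mule0 adde0 in Hr.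
specialize (Hr eventually_filter).
apply: (@squeeze_cvge _ _ _ _ (fun=> 0%E) _ _ _ 0%E (cvg_cst 0%E) Hr).
apply: filterE => n; apply/andP; split; first exact: H1dist2_ge0.
have -> : (fun k => cpder k (comb c1 c2 (ps n) (ps' n))) =
   (fun k => comb c1 c2 (cpder k (ps n)) (cpder k (ps' n))).
  by apply: funext => k; exact: cpder_lin.
apply: H1_lin_le.
- exact: CM_ctest.
- exact: CM_ctest.
- exact: CM_L2.
- exact: CM_L2.
- by move=> k; exact: CM_cpder.
- by move=> k; exact: CM_cpder.
- by move=> k; apply: CM_L2; case: (gu k).
- by move=> k; apply: CM_L2; case: (gv k).
Qed.

Lemma rint0 : rint D (fun=> 0) = 0.
Proof. by rewrite /rint (Rintegral_cst _ mOm) mul0r. Qed.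

Lemma rint_eq0 (f : V -> R) : (forall x, f x = 0) -> rint D f = 0.
Proof. by move=> f0; rewrite (rint_ext f0) rint0. Qed.

Lemma ReMc (p q : R[i]) : complex.Re (p * q^*) = complex.Re p * complex.Re q + complex.Im p * complex.Im q.
Proof. case: p => a b; case: q => c d /=. ring. Qed.
Lemma ImMc (p q : R[i]) : complex.Im (p * q^*) = complex.Im p * complex.Re q - complex.Re p * complex.Im q.
Proof. case: p => a b; case: q => c d /=. ring. Qed.
Lemma ReCi (p : R[i]) : complex.Re ('i * p) = - complex.Im p.
Proof. case: p => a b /=. ring. Qed.
Lemma ImCi (p : R[i]) : complex.Im ('i * p) = complex.Re p.
Proof. case: p => a b /=. ring. Qed.

Lemma H10_comb c1 c2 u v : H10 D u -> H10 D v -> H10 D (fun x => c1 * u x + c2 * v x).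
Proof. exact: H10_lin. Qed.

Lemma H10_ext u v : (forall x, u x = v x) -> H10 D u -> H10 D v.
Proof. by move=> uv; have -> : v = u by apply: funext => x; rewrite uv. Qed.

Lemma H10_0 u : H10 D u -> H10 D (fun=> 0).
Proof.
move=> Hu; apply: (H10_ext _ (H10_comb (-1) 1 Hu Hu)) => x /=.
by rewrite mulN1r mul1r addNr.
Qed.

Lemma H10_i u : H10 D u -> H10 D (imul u).
Proof.
move=> Hu; apply: (H10_ext _ (H10_comb 'i 0 Hu Hu)) => x /=.
by rewrite mul0r addr0.
Qed.

Lemma H10_ax (a : R) z w : H10 D z -> H10 D w -> H10 D (fun x => (a%:C)%C * z x + w x).
Proof.
move=> Hz Hw; apply: (H10_ext _ (H10_comb (a%:C)%C 1 Hz Hw)) => x /=.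
by rewrite mul1r.
Qed.

Lemma H10_L2 u : H10 D u -> L2 D u.
Proof. by case. Qed.

Definition RP (f g : V -> R[i]) := rint D (fun x => complex.Re (f x * (g x)^*)).

Lemma Ir_RP f g : L2 D f -> L2 D g -> Ir (fun x => complex.Re (f x * (g x)^*)).
Proof.
move=> /L2_SQ [fr fi] /L2_SQ [gr gi].
apply: (Ir_ext _ (IrD (SQ_mul fr gr) (SQ_mul fi gi))) => x.
by rewrite ReMc.
Qed.

Lemma Ir_IP f g : L2 D f -> L2 D g -> Ir (fun x => complex.Im (f x * (g x)^*)).
Proof.
move=> /L2_SQ [fr fi] /L2_SQ [gr gi].
apply: (Ir_ext _ (IrD (SQ_mul fi gr) (IrZ (-1) (SQ_mul fr gi)))) => x.
by rewrite ImMc mulN1r.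
Qed.

Lemma RP_lin_l (a : R) f g h : L2 D f -> L2 D g -> L2 D h ->
  RP (fun x => (a%:C)%C * g x + h x) f = a * RP g f + RP h f.
Proof.
move=> Lf Lg Lh; rewrite /RP -rintZ; last exact: Ir_RP.
rewrite -rintD; [|exact: IrZ (Ir_RP Lg Lf)|exact: Ir_RP].
apply: rint_ext => x; rewrite !ReMc.
case: (g x) => ? ?; case: (h x) => ? ?; rewrite /=; ring.
Qed.

Lemma RP_lin_r (a : R) f g h : L2 D f -> L2 D g -> L2 D h ->
  RP f (fun x => (a%:C)%C * g x + h x) = a * RP f g + RP f h.
Proof.
move=> Lf Lg Lh; rewrite /RP -rintZ; last exact: Ir_RP.
rewrite -rintD; [|exact: IrZ (Ir_RP Lf Lg)|exact: Ir_RP].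
apply: rint_ext => x; rewrite !ReMc.
case: (g x) => ? ?; case: (h x) => ? ?; rewrite /=; ring.
Qed.

Lemma L2reE f g : L2re D f g = RP f g.
Proof. by []. Qed.

Lemma cint0P (h : V -> R[i]) :
  cint D h = 0 <-> rint D (fun x => complex.Re (h x)) = 0 /\ rint D (fun x => complex.Im (h x)) = 0.
Proof.
split.
  by move=> e0; split; [move: (congr1 (@complex.Re R) e0)|move: (congr1 (@complex.Im R) e0)].
by move=> [e1 e2]; rewrite /cint e1 e2.
Qed.


Lemma m1C (z : R[i]) : ((-1)%:C)%C * z + z = 0.
Proof. case: z => a b /=. congr Complex; ring. Qed.
Lemma rCi (s : R) (z : R[i]) : 'i * z * (s%:C)%C = (s%:C)%C * ('i * z) + 0.
Proof. rewrite addr0; ring. Qed.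

Section Main.
Variables (p : nat) (N : 'I_p -> R) (phi : 'I_p -> V -> R[i])
  (Gpair : 'I_p -> (V -> R[i]) -> (V -> R[i]) -> R).
Hypothesis hN : forall j, 0 < N j.
Hypothesis hphi : oblique D N phi.
Hypothesis hG : forall j, op_H10_Hm1 D (Gpair j).
Hypothesis hg : riemannian_at D (prod_metric Gpair) phi.

Lemma Hphi j : H10 D (phi j). Proof. by case: (hphi j). Qed.
Lemma HN j : rint D (fun x => abs2 (phi j x)) = N j. Proof. by case: (hphi j). Qed.

Lemma G0r j y : H10 D y -> Gpair j y (fun=> 0) = 0.
Proof.
move=> Hy; have := ((hG j).2.2 y Hy).1 (-1) _ _ (Hphi j) (Hphi j).
have -> : (fun x => ((-1)%:C)%C * phi j x + phi j x) = (fun=> 0).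
  by apply: funext => x; exact: m1C.
by move=> ->; rewrite mulN1r addNr.
Qed.

Lemma G0l j z : H10 D z -> Gpair j (fun=> 0) z = 0.
Proof.
move=> Hz; have := (hG j).2.1 (-1) _ _ _ (Hphi j) (Hphi j) Hz.
have -> : (fun x => ((-1)%:C)%C * phi j x + phi j x) = (fun=> 0).
  by apply: funext => x; exact: m1C.
by move=> ->; rewrite mulN1r addNr.
Qed.

Lemma Glin2 j y (a : R) z w : H10 D y -> H10 D z -> H10 D w ->
  Gpair j y (fun x => (a%:C)%C * z x + w x) = a * Gpair j y z + Gpair j y w.
Proof. move=> Hy; exact: ((hG j).2.2 y Hy).1. Qed.

Lemma gvert xi (sigma : 'I_p -> R) : (forall k, H10 D (xi k)) ->
  prod_metric Gpair xi (fun k x => 'i * phi k x * ((sigma k)%:C)%C) =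
  \sum_(k < p) sigma k * Gpair k (xi k) (imul (phi k)).
Proof.
move=> Hxi; rewrite /prod_metric; apply: eq_bigr => k _.
rewrite (_ : (fun x => 'i * phi k x * ((sigma k)%:C)%C) =
   (fun x => ((sigma k)%:C)%C * imul (phi k) x + (fun=> 0 : R[i]) x)); last first.
  by apply: funext => x; rewrite /imul; exact: rCi.
rewrite (Glin2 _ _ (Hxi k) (H10_i (Hphi k)) (H10_0 (Hphi k))).
by rewrite G0r // addr0.
Qed.

Definition ej j (z : V -> R[i]) : 'I_p -> V -> R[i] :=
  fun k => if k == j then z else fun=> 0.

Lemma H10_ej j z : H10 D z -> forall k, H10 D (ej j z k).
Proof. by move=> Hz k; rewrite /ej; case: eqP => // _; exact: H10_0 (Hphi k). Qed.

Lemma gvert_ej j z (sigma : 'I_p -> R) : H10 D z ->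
  prod_metric Gpair (ej j z) (fun k x => 'i * phi k x * ((sigma k)%:C)%C) =
  sigma j * Gpair j z (imul (phi j)).
Proof.
move=> Hz; rewrite gvert; last exact: H10_ej.
rewrite (bigD1 j) //= /ej eqxx big1 ?addr0 // => k /negbTE ->.
by rewrite G0l ?mulr0 //; exact: H10_i (Hphi k).
Qed.

Lemma g_ej j y z : H10 D y -> H10 D z ->
  prod_metric Gpair (ej j y) (ej j z) = Gpair j y z.
Proof.
move=> Hy Hz; rewrite /prod_metric (bigD1 j) //= /ej eqxx big1 ?addr0 // => k /negbTE ->.
by rewrite G0l //; exact: H10_0 (Hphi k).
Qed.

Lemma tanE j z : tangent_sphere D (phi j) z <-> H10 D z /\ RP z (phi j) = 0.
Proof. by []. Qed.

Lemma tan0 k : tangent_sphere D (phi k) (fun=> 0).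
Proof.
split; first exact: H10_0 (Hphi k).
by apply: rint_eq0 => x; rewrite mul0r.
Qed.

Lemma tan_ej j z : tangent_sphere D (phi j) z -> tangentOB D phi (ej j z).
Proof. by move=> tz k; rewrite /ej; case: eqP => [->//|_]; exact: tan0. Qed.

Lemma tan_psi j : tangent_sphere D (phi j) (imul (phi j)).
Proof.
split; first exact: H10_i (Hphi j).
by apply: rint_eq0 => x; rewrite /imul ReMc ReCi ImCi; ring.
Qed.

Lemma Gsym j y z : tangent_sphere D (phi j) y -> tangent_sphere D (phi j) z ->
  Gpair j y z = Gpair j z y.
Proof.
move=> ty tz; rewrite -(g_ej j ty.1 tz.1) -(g_ej j tz.1 ty.1).
exact: hg.1 _ _ (tan_ej ty) (tan_ej tz).
Qed.

Lemma RP_psi_psi j : RP (imul (phi j)) (imul (phi j)) = N j.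
Proof.
rewrite -HN; apply: rint_ext => x; rewrite /imul ReMc ReCi ImCi /abs2; ring.
Qed.

Lemma cint_phi_z j z : H10 D z ->
  cint D (fun x => phi j x * (z x)^*) = 0 <->
  RP z (phi j) = 0 /\ RP (imul (phi j)) z = 0.
Proof.
move=> Hz; have Lz := H10_L2 Hz; have Lpsi := H10_L2 (H10_i (Hphi j)).
have e1 : rint D (fun x => complex.Re (phi j x * (z x)^*)) = RP z (phi j).
  by apply: rint_ext => x; rewrite !ReMc mulrC [X in _ + X]mulrC.
have e2 : rint D (fun x => complex.Im (phi j x * (z x)^*)) = -1 * RP (imul (phi j)) z.
  rewrite -rintZ; last exact: Ir_RP.
  by apply: rint_ext => x; rewrite ImMc ReMc /imul ReCi ImCi; ring.
rewrite cint0P e1 e2; split => -[-> h]; split => //.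
  by move: h; rewrite mulN1r => /eqP; rewrite oppr_eq0 => /eqP.
by rewrite h mulr0.
Qed.

Theorem mainG : horizontal D (prod_metric Gpair) phi = horizontalL D phi <->
  (forall j : 'I_p, exists varsigma : R, varsigma != 0 /\
     forall z, tangent_sphere D (phi j) z ->
       Gpair j (imul (phi j)) z = varsigma * L2re D (imul (phi j)) z).
Proof.
split.
- move=> Heq j.
  have Npos := hN j.
  have Hpsi : H10 D (imul (phi j)) := H10_i (Hphi j).
  have Lpsi := H10_L2 Hpsi; have Lphi := H10_L2 (Hphi j).
  have tpsi := tan_psi j.
  have toL : forall y, tangent_sphere D (phi j) y -> Gpair j y (imul (phi j)) = 0 ->
      RP (imul (phi j)) y = 0.
    move=> y ty Gy.
    have : horizontal D (prod_metric Gpair) phi (ej j y).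
      split; first exact: tan_ej.
      move=> nu [sigma ->]; rewrite gvert_ej ?Gy ?mulr0 //; exact: ty.1.
    by rewrite Heq => -[_ /(_ j)]; rewrite /ej eqxx => /(cint_phi_z _ ty.1) [].
  have toH : forall y, tangent_sphere D (phi j) y -> RP (imul (phi j)) y = 0 ->
      Gpair j y (imul (phi j)) = 0.
    move=> y ty Ry.
    have : horizontalL D phi (ej j y).
      split; first by apply: H10_ej; exact: ty.1.
      move=> k; rewrite /ej; case: eqP => [->|_].
        by apply/(cint_phi_z _ ty.1); split => //; exact: ty.2.
      by apply/cint0P; split; apply: rint_eq0 => x; rewrite conjC0 mulr0.
    rewrite -Heq => -[_ /(_ (fun k x => 'i * phi k x * (((if k == j then 1 else 0) : R)%:C)%C))].
    rewrite gvert_ej; last exact: ty.1.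
    by rewrite eqxx mul1r; apply; eexists.
  have c0 : Gpair j (imul (phi j)) (imul (phi j)) != 0.
    apply/negP => /eqP c0.
    have := toL _ tpsi c0; rewrite RP_psi_psi => N0.
    by move: Npos; rewrite N0 ltxx.
  exists (Gpair j (imul (phi j)) (imul (phi j)) / N j); split.
    by rewrite mulf_neq0 // invr_eq0 gt_eqF.
  move=> z tz.
  have Lz := H10_L2 tz.1.
  pose s := RP (imul (phi j)) z / N j.
  pose w := fun x => ((- s)%:C)%C * imul (phi j) x + z x.
  have Hw : H10 D w := H10_ax (-s) Hpsi tz.1.
  have tw : tangent_sphere D (phi j) w.
    split => //; change (RP w (phi j) = 0); rewrite /w.
    rewrite (RP_lin_l (-s) Lphi Lpsi Lz).
    have -> : RP (imul (phi j)) (phi j) = 0 by exact: tpsi.2.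
    rewrite mulr0 add0r; exact: tz.2.
  have Rw : RP (imul (phi j)) w = 0.
    rewrite /w (RP_lin_r (-s) Lpsi Lpsi Lz) RP_psi_psi /s.
    have Nn : N j != 0 by rewrite gt_eqF.
    by field.
  have Gw := toH w tw Rw.
  rewrite (Gsym tw tpsi) /w (Glin2 _ _ Hpsi Hpsi tz.1) in Gw.
  rewrite L2reE.
  have Nn : N j != 0 by rewrite gt_eqF.
  move: Gw; rewrite /s => Gw.
  have -> : Gpair j (imul (phi j)) z =
    RP (imul (phi j)) z / N j * Gpair j (imul (phi j)) (imul (phi j)).
    by move: Gw; rewrite mulNr => /eqP; rewrite addrC subr_eq0 => /eqP.
  ring.
- move=> Heig; apply/seteqP; split => xi.
  + move=> [txi hor]; split; first by move=> k; exact: (txi k).1.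
    move=> j; have [vs [vs0 Hvs]] := Heig j.
    have H := hor (fun k x => 'i * phi k x * (((if k == j then 1 else 0) : R)%:C)%C)
      (ex_intro _ _ erefl).
    rewrite gvert in H; last by move=> k; exact: (txi k).1.
    rewrite (bigD1 j) //= eqxx mul1r big1 ?addr0 in H; last first.
      by move=> k /negbTE ->; rewrite mul0r.
    rewrite (Gsym (txi j) (tan_psi j)) Hvs in H; last exact: txi.
    apply/(cint_phi_z _ (txi j).1); split; first exact: (txi j).2.
    by move: H => /eqP; rewrite mulf_eq0 (negbTE vs0) /= => /eqP.
  + move=> [Hxi hL].
    have txi : tangentOB D phi xi.
      by move=> k; have /(cint_phi_z _ (Hxi k)) [h1 h2] := hL k; split.
    split => // nu [sigma ->]; rewrite gvert //; apply: big1 => k _.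
    have [vs [_ Hvs]] := Heig k.
    rewrite (Gsym (txi k) (tan_psi k)) Hvs; last exact: txi.
    have /(cint_phi_z _ (Hxi k)) [_ h2] := hL k.
    by rewrite L2reE h2 !mulr0.
Qed.

End Main.

End Generic.

Unset Implicit Arguments.

Theorem proposition4p3 (R : realType) (d : nat) (hd : d = 2%N \/ d = 3%N)
  (D : set (sV (Rd R d))) (hD : bounded_lipschitz_domain D)
  (p : nat) (N : 'I_p -> R) (hN : forall j, 0 < N j)
  (phi : 'I_p -> sV (Rd R d) -> R[i]) (hphi : oblique D N phi)
  (Gpair : 'I_p -> (sV (Rd R d) -> R[i]) -> (sV (Rd R d) -> R[i]) -> R)
  (hG : forall j, op_H10_Hm1 D (Gpair j))
  (hg : riemannian_at D (prod_metric Gpair) phi) :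
  horizontal D (prod_metric Gpair) phi = horizontalL D phi <->
  (forall j : 'I_p, exists varsigma : R, varsigma != 0 /\
     forall z, tangent_sphere D (phi j) z ->
       Gpair j (imul (phi j)) z = varsigma * L2re D (imul (phi j)) z).
Proof.
have [oD [_ [_ [bD _]]]] := hD.
case: hd => hd; subst d.
- exact: (mainG (@E2_open_meas R) oD (E2_box bD) hN hphi hG hg).
- exact: (mainG (@E3_open_meas R) oD (E3_box bD) hN hphi hG hg).
Qed.
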